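(* Let $X$ be a $T_1$ space and $Q\subset C(X)$. The following are equivalent: (1) $Q$ is compact in $(C(X),\tau_\Gamma)$; (2) $Q$ is countably compact in $(C(X),\tau_\Gamma)$; (3) $Q$ is pseudocompact in $(C(X),\tau_\Gamma)$ (i.e. every continuous real-valued function on $Q$ with the subspace topology from $\tau_\Gamma$ is bounded).
   Context: $C(X)$ is the set of continuous real-valued functions on $X$, each identified with its graph in $X\times\mathbb{R}$. The graph topology $\tau_\Gamma$ on $C(X)$ has base $\{F_G: G\text{ open in }X\times\mathbb{R}\}$ where $F_G=\{f\in C(X): f\subset G\}$. *)

(* Defs.v *)
From Stdlib Require Import Reals List.
Open Scope R_scope.

Definition is_topology {T : Type} (open : (T -> Prop) -> Prop) : Prop :=
  open (fun _ => True) /\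
  open (fun _ => False) /\
  (forall U V, open U -> open V -> open (fun x => U x /\ V x)) /\
  (forall C : (T -> Prop) -> Prop, (forall U, C U -> open U) ->
     open (fun x => exists U, C U /\ U x)).

Definition T1 {T : Type} (open : (T -> Prop) -> Prop) : Prop :=
  forall x y : T, x <> y -> exists U, open U /\ U x /\ ~ U y.

Definition R_open (V : R -> Prop) : Prop :=
  forall y, V y -> exists eps, eps > 0 /\ forall z, Rabs (z - y) < eps -> V z.

Definition prod_open {X : Type} (openX : (X -> Prop) -> Prop)
  (W : X * R -> Prop) : Prop :=
  forall x y, W (x, y) ->
    exists U eps, openX U /\ U x /\ eps > 0 /\
      forall x' y', U x' -> Rabs (y' - y) < eps -> W (x', y').

Definition continuous {A B : Type} (openA : (A -> Prop) -> Prop)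
  (openB : (B -> Prop) -> Prop) (f : A -> B) : Prop :=
  forall V, openB V -> openA (fun a => V (f a)).

Definition CX {X : Type} (openX : (X -> Prop) -> Prop) : Type :=
  { f : X -> R | continuous openX R_open f }.

Definition graph_in {X : Type} (f : X -> R) (G : X * R -> Prop) : Prop :=
  forall x, G (x, f x).

Definition F_G {X : Type} {openX : (X -> Prop) -> Prop}
  (G : X * R -> Prop) : CX openX -> Prop :=
  fun f => graph_in (proj1_sig f) G.

(* Graph topology tau_Gamma: the topology generated by the base
   { F_G : G open in X x R }. *)
Definition graph_open {X : Type} (openX : (X -> Prop) -> Prop)
  (U : CX openX -> Prop) : Prop :=
  forall f, U f -> exists G, prod_open openX G /\ F_G G f /\
    forall g, F_G G g -> U g.

Definition compact_in {T : Type} (open : (T -> Prop) -> Prop)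
  (Q : T -> Prop) : Prop :=
  forall C : (T -> Prop) -> Prop,
    (forall U, C U -> open U) ->
    (forall q, Q q -> exists U, C U /\ U q) ->
    exists l : list (T -> Prop),
      (forall U, In U l -> C U) /\
      (forall q, Q q -> exists U, In U l /\ U q).

Definition countably_compact_in {T : Type} (open : (T -> Prop) -> Prop)
  (Q : T -> Prop) : Prop :=
  forall U : nat -> (T -> Prop),
    (forall n, open (U n)) ->
    (forall q, Q q -> exists n, U n q) ->
    exists N, forall q, Q q -> exists n, (n < N)%nat /\ U n q.

Definition subspace_open {T : Type} (open : (T -> Prop) -> Prop)
  (Q : T -> Prop) (V : {t : T | Q t} -> Prop) : Prop :=
  exists U, open U /\ forall q : {t : T | Q t}, V q <-> U (proj1_sig q).

Definition pseudocompact_in {T : Type} (open : (T -> Prop) -> Prop)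
  (Q : T -> Prop) : Prop :=
  forall g : {t : T | Q t} -> R,
    continuous (subspace_open open Q) R_open g ->
    exists M, forall q, Rabs (g q) <= M.

(* Main.v *)
Require Import Defs.
From Stdlib Require Import Reals List Lra Lia ZArith Classical ClassicalEpsilon.
Open Scope R_scope.

Lemma arch (r : R) : exists n : nat, r < INR n.
Proof.
  destruct (archimed (Rabs r)) as [H _].
  exists (Z.to_nat (up (Rabs r))). rewrite INR_IZR_INZ, Z2Nat.id.
  - apply Rle_lt_trans with (Rabs r); [apply Rle_abs| exact H].
  - apply le_IZR; pose proof (Rabs_pos r); simpl; lra.
Qed.

Lemma term_le_sum (a : nat -> R) n j :
  (forall i, 0 <= a i) -> (j <= n)%nat -> a j <= sum_f_R0 a n.
Proof.
  intros Ha; induction n; intros Hj.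
  - assert (j = 0%nat) by lia; subst; simpl; lra.
  - simpl. destruct (Nat.eq_dec j (S n)) as [->|Hne].
    + pose proof (cond_pos_sum a n Ha); lra.
    + pose proof (IHn ltac:(lia)); pose proof (Ha (S n)); lra.
Qed.

Lemma R_open_ball (a e : R) : R_open (fun y => Rabs (y - a) < e).
Proof.
  intros y Hy. exists (e - Rabs (y - a)). split; [lra|].
  intros z Hz. pose proof (Rabs_triang (z - y) (y - a)).
  replace (z - y + (y - a)) with (z - a) in H by ring. lra.
Qed.

Lemma abs_le_b x e : Rabs x <= e -> - e <= x <= e.
Proof. unfold Rabs; destruct (Rcase_abs x); lra. Qed.
Lemma abs_lt_b x e : Rabs x < e -> - e < x < e.
Proof. unfold Rabs; destruct (Rcase_abs x); lra. Qed.

Lemma R_open_abs (e : R) : R_open (fun y => Rabs y < e).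
Proof.
  intros y Hy. destruct (R_open_ball 0 e y) as [eps [He H]]. rewrite Rminus_0_r; auto.
  exists eps. split; auto. intros z Hz. specialize (H z Hz). rewrite Rminus_0_r in H; auto.
Qed.

Definition bnd (u : nat -> R) := exists M, forall n, u n <= M.

Lemma bnd_bound u : bnd u -> bound (fun r => exists n, r = u n).
Proof. intros [M HM]. exists M. intros r [n ->]. apply HM. Qed.
Lemma ex_seq (u : nat -> R) : exists r, (fun r => exists n, r = u n) r.
Proof. exists (u 0%nat). exists 0%nat. reflexivity. Qed.

Definition supR (u : nat -> R) : R :=
  match excluded_middle_informative (bnd u) with
  | left H => proj1_sig (completeness _ (bnd_bound u H) (ex_seq u))
  | right _ => 0
  end.

Lemma supR_ub u : bnd u -> forall n, u n <= supR u.
Proof.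
  intros H n. unfold supR. destruct (excluded_middle_informative (bnd u)) as [b|]; [|contradiction].
  pose proof (proj2_sig (completeness _ (bnd_bound u b) (ex_seq u))) as [Hm _]. apply Hm. exists n; reflexivity.
Qed.
Lemma supR_le u M : bnd u -> (forall n, u n <= M) -> supR u <= M.
Proof.
  intros H HM. unfold supR. destruct (excluded_middle_informative (bnd u)) as [b|]; [|contradiction].
  pose proof (proj2_sig (completeness _ (bnd_bound u b) (ex_seq u))) as [_ Hm]. apply Hm. intros r [n ->]. apply HM.
Qed.
Lemma supR_unb u : ~ bnd u -> supR u = 0.
Proof. intros H. unfold supR. destruct (excluded_middle_informative (bnd u)); [contradiction|reflexivity]. Qed.

Lemma sup_close u u' e : (forall n, Rabs (u' n - u n) <= e) -> Rabs (supR u' - supR u) <= e.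
Proof.
  intros H.
  assert (He : 0 <= e) by (eapply Rle_trans; [apply Rabs_pos| apply (H 0%nat)]).
  assert (Hb : bnd u <-> bnd u').
  { split; intros [M HM]; [exists (M + e)| exists (M + e)]; intros n; specialize (H n); specialize (HM n);
      apply abs_le_b in H; lra. }
  destruct (classic (bnd u)) as [B|B].
  - assert (B' : bnd u') by tauto.
    apply Rabs_le; split.
    + assert (supR u <= supR u' + e); [|lra].
      apply supR_le; auto. intros n. specialize (H n). apply abs_le_b in H.
      pose proof (supR_ub u' B' n); lra.
    + assert (supR u' <= supR u + e); [|lra].
      apply supR_le; auto. intros n. specialize (H n). apply abs_le_b in H.
      pose proof (supR_ub u B n); lra.
  - assert (B' : ~ bnd u') by tauto.
    rewrite supR_unb, supR_unb by auto. rewrite Rminus_0_r, Rabs_R0; auto.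
Qed.

Lemma bnd_ev_zero u N : (forall n, (N <= n)%nat -> u n = 0) -> bnd u.
Proof.
  intros H. assert (forall K, exists M, 0 <= M /\ forall n, (n < K)%nat -> u n <= M).
  { induction K. - exists 0. split; [lra|]. intros; lia.
    - destruct IHK as [M [HM0 HM]]. exists (Rmax M (u K)). split.
      + eapply Rle_trans; [exact HM0| apply Rmax_l].
      + intros n Hn. destruct (Nat.eq_dec n K) as [->|]. apply Rmax_r.
        eapply Rle_trans; [apply HM; lia| apply Rmax_l]. }
  destruct (H0 N) as [M [HM0 HM]]. exists M. intros n.
  destruct (Nat.lt_ge_cases n N). auto. rewrite H by auto. exact HM0.
Qed.

Definition hist_gen {A : Type} (nx : list A -> A) : nat -> list A :=
  fix h t := match t with O => nil | S t => nx (h t) :: h t end.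

Section Main.
Context {X : Type} (openX : (X -> Prop) -> Prop) (Htop : is_topology openX) (HT1 : T1 openX).

Notation Y := (CX openX).
Notation val := (@proj1_sig (X -> R) _).
Notation FG := (@F_G X openX).

Lemma open_full : openX (fun _ => True).
Proof. destruct Htop as [H _]; exact H. Qed.
Lemma open_inter U V : openX U -> openX V -> openX (fun x => U x /\ V x).
Proof. destruct Htop as [_ [_ [H _]]]; apply H. Qed.

Lemma cont_at (q : Y) x e : e > 0 -> exists U, openX U /\ U x /\ forall x', U x' -> Rabs (val q x' - val q x) < e.
Proof.
  intros He. destruct q as [q Hq]. simpl.
  exists (fun x' => Rabs (q x' - q x) < e). split.
  - apply (Hq (fun y => Rabs (y - q x) < e)). apply R_open_ball.
  - split; auto. rewrite Rminus_diag, Rabs_R0; auto.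
Qed.

Lemma FG_open G : prod_open openX G -> graph_open openX (FG G).
Proof. intros HG f Hf. exists G. split; auto. Qed.

Definition tube (q : Y) (e : R) : X * R -> Prop := fun p => Rabs (snd p - val q (fst p)) < e.

Lemma tube_open q e : prod_open openX (tube q e).
Proof.
  intros x y H. unfold tube in H; simpl in H.
  set (eta := (e - Rabs (y - val q x)) / 2).
  assert (Heta : eta > 0) by (unfold eta; lra).
  destruct (cont_at q x eta Heta) as [U [HU [Ux HUx]]].
  exists U, eta. split; [exact HU|]. split; [exact Ux|]. split; [exact Heta|].
  intros x' y' Hx' Hy'. unfold tube; simpl. specialize (HUx x' Hx').
  pose proof (Rabs_triang (y' - y) (y - val q x)) as T1.
  pose proof (Rabs_triang (y' - y + (y - val q x)) (val q x - val q x')) as T2.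
  rewrite (Rabs_minus_sym (val q x)) in T2.
  replace (y' - y + (y - val q x) + (val q x - val q x')) with (y' - val q x') in T2 by ring.
  unfold eta in *; lra.
Qed.

Lemma tube_in q e : e > 0 -> FG (tube q e) q.
Proof. intros He x. unfold tube; simpl. rewrite Rminus_diag, Rabs_R0; auto. Qed.

Lemma tube_close q e g : FG (tube q e) g -> forall x, Rabs (val g x - val q x) < e.
Proof. intros H x. apply (H x). Qed.

Variable Q : Y -> Prop.
Notation sub := {t : Y | Q t}.

Lemma cont_crit (psi : sub -> R) :
  (forall q eps, eps > 0 -> exists W, graph_open openX W /\ W (proj1_sig q) /\
      forall q', W (proj1_sig q') -> Rabs (psi q' - psi q) < eps) ->
  continuous (subspace_open (graph_open openX) Q) R_open psi.
Proof.
  intros H V HV.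
  exists (fun h => exists W, graph_open openX W /\ W h /\ forall q', W (proj1_sig q') -> V (psi q')).
  split.
  - intros f [W [HW [Wf Hs]]]. destruct (HW f Wf) as [G [HG [FGf HGs]]].
    exists G. split; auto. split; auto. intros g Hg. exists W. split; auto.
  - intros q. split.
    + intros Vq. destruct (HV _ Vq) as [eps [Heps Hball]].
      destruct (H q eps Heps) as [W [HW [Wq HWs]]]. exists W. split; [exact HW|]. split; [exact Wq|].
      intros q' Wq'. apply Hball. apply HWs; auto.
    + intros [W [_ [Wq Hs]]]. apply Hs; exact Wq.
Qed.

Lemma compact_cc : compact_in (graph_open openX) Q -> countably_compact_in (graph_open openX) Q.
Proof.
  intros Hc U HU Hcov.
  destruct (Hc (fun V => exists n, V = U n)) as [l [Hl1 Hl2]].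
  - intros V [n ->]; auto.
  - intros q Hq. destruct (Hcov q Hq) as [n Hn]. exists (U n). split; eauto.
  - assert (Hb : forall l : list (Y -> Prop), (forall V, In V l -> exists n, V = U n) ->
      exists N, forall V, In V l -> exists n, (n < N)%nat /\ V = U n).
    { induction l0 as [|V l0 IH]; intros Hin.
      - exists 0%nat; intros V [].
      - destruct IH as [N HN]. { intros; apply Hin; right; auto. }
        destruct (Hin V (or_introl eq_refl)) as [m Hm].
        exists (Nat.max N (S m)). intros V' [<-|HV'].
        + exists m; split; [lia|auto].
        + destruct (HN V' HV') as [n [Hn ->]]. exists n; split; [lia|auto]. }
    destruct (Hb l Hl1) as [N HN]. exists N. intros q Hq.
    destruct (Hl2 q Hq) as [V [HV Vq]]. destruct (HN V HV) as [n [Hn ->]]. eauto.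
Qed.

Lemma cc_pc : countably_compact_in (graph_open openX) Q -> pseudocompact_in (graph_open openX) Q.
Proof.
  intros Hcc g Hg.
  set (U := fun (n : nat) (h : Y) => exists W, graph_open openX W /\
        (forall q : sub, W (proj1_sig q) <-> Rabs (g q) < INR n) /\ W h).
  destruct (Hcc U) as [N HN].
  - intros n f [W [HW [HWq Wf]]]. destruct (HW f Wf) as [G [HG [FGf HGs]]].
    exists G. split; auto. split; auto. intros h Hh. exists W. split; [exact HW|]. split; [exact HWq|]. apply HGs; exact Hh.
  - intros q Hq. destruct (arch (Rabs (g (exist _ q Hq)))) as [n Hn]. exists n.
    destruct (Hg (fun y => Rabs y < INR n)) as [W [HW HWe]].
    { apply R_open_abs. }
    exists W. split; auto. split. intros q'. rewrite (HWe q'). tauto.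
    apply (HWe (exist _ q Hq)); auto.
  - exists (INR N). intros q. destruct (HN (proj1_sig q) (proj2_sig q)) as [n [Hn [W [_ [HWe Wq]]]]].
    apply HWe in Wq. apply Rlt_le. eapply Rlt_le_trans; [exact Wq|]. apply le_INR; lia.
Qed.


Lemma wdiff w a a' e : 0 <= w -> 0 <= e -> Rabs (a' - a) < e / (w + 1) ->
  Rabs (w * Rabs a' - w * Rabs a) <= e.
Proof.
  intros Hw He H.
  rewrite <- Rmult_minus_distr_l, Rabs_mult, (Rabs_pos_eq w) by auto.
  apply Rle_trans with (w * (e / (w + 1))).
  - apply Rmult_le_compat_l; auto. left. eapply Rle_lt_trans; [|exact H]. apply Rabs_triang_inv2.
  - replace (w * (e / (w + 1))) with (e - e / (w + 1)) by (field; lra).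
    assert (0 <= e / (w + 1)) by (unfold Rdiv; apply Rmult_le_pos; [lra| left; apply Rinv_0_lt_compat; lra]). lra.
Qed.

Lemma big_term m S d : 0 < d -> / d <= S -> INR m <= INR m * S * d.
Proof.
  intros Hd HS. assert (1 <= S * d).
  { replace 1 with (/ d * d) by (field; lra). apply Rmult_le_compat_r; lra. }
  rewrite Rmult_assoc. pose proof (pos_INR m).
  replace (INR m) with (INR m * 1) at 1 by ring. apply Rmult_le_compat_l; auto.
Qed.

Section Core.
Context (z : nat -> X)
  (Hesc : forall x, exists J, forall j, (J <= j)%nat -> z j <> x)
  (Hcd : forall x, exists U, openX U /\ U x /\ forall n, U (z n) -> z n = x)
  (Hpc : pseudocompact_in (graph_open openX) Q).

Definition boxG (k : X -> R) (eps : nat -> R) : X * R -> Prop :=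
  fun p => forall n, fst p = z n -> Rabs (snd p - k (z n)) < eps n.

Lemma boxG_open k eps : (forall n, eps n > 0) -> prod_open openX (boxG k eps).
Proof.
  intros Heps x y H. destruct (Hesc x) as [J HJ].
  assert (Hm : forall J, exists e, e > 0 /\ forall n, (n < J)%nat -> z n = x -> Rabs (y - k x) + e < eps n).
  { induction J0.
    - exists 1. split; [lra|]. intros; lia.
    - destruct IHJ0 as [e1 [He1 H1]].
      destruct (classic (z J0 = x)) as [E|E].
      + assert (HJ0 : Rabs (y - k x) < eps J0) by (specialize (H J0 (eq_sym E)); rewrite E in H; exact H).
        exists (Rmin e1 ((eps J0 - Rabs (y - k x)) / 2)). split.
        * apply Rmin_pos; lra.
        * intros n Hn Hzn. destruct (Nat.eq_dec n J0) as [->|Hne].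
          -- pose proof (Rmin_r e1 ((eps J0 - Rabs (y - k x)) / 2)). lra.
          -- pose proof (H1 n ltac:(lia) Hzn). pose proof (Rmin_l e1 ((eps J0 - Rabs (y - k x)) / 2)). lra.
      + exists e1. split; auto. intros n Hn Hzn. destruct (Nat.eq_dec n J0) as [->|Hne].
        * contradiction. * apply H1; auto; lia. }
  destruct (Hm J) as [e [He HeJ]].
  destruct (Hcd x) as [U [HU [Ux HUd]]].
  exists U, e. split; [exact HU|]. split; [exact Ux|]. split; [exact He|].
  intros x' y' Hx' Hy' n Hn. simpl in Hn, Hx' |- *. subst x'.
  pose proof (HUd n Hx') as Ezn.
  assert (Hn : (n < J)%nat). { destruct (Nat.lt_ge_cases n J); auto. exfalso; apply (HJ n); auto. }
  specialize (HeJ n Hn Ezn). rewrite Ezn.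
  pose proof (Rabs_triang (y' - y) (y - k x)). replace (y' - y + (y - k x)) with (y' - k x) in H0 by ring.
  lra.
Qed.

Lemma box_cont (psi : sub -> R) :
  (forall q e, e > 0 -> exists eps, (forall n, eps n > 0) /\ forall q',
     (forall n, Rabs (val (proj1_sig q') (z n) - val (proj1_sig q) (z n)) < eps n) ->
     Rabs (psi q' - psi q) < e) ->
  continuous (subspace_open (graph_open openX) Q) R_open psi.
Proof.
  intros H. apply cont_crit. intros q e He.
  destruct (H q e He) as [eps [Heps Hq]].
  exists (FG (boxG (val (proj1_sig q)) eps)). split; [apply FG_open, boxG_open; auto|]. split.
  - intros x n Hn. unfold boxG in *. simpl in *. subst x. rewrite Rminus_diag, Rabs_R0. apply Heps.
  - intros q' Hq'. apply Hq. intros n. apply (Hq' (z n) n eq_refl).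
Qed.

Definition ev (a b : X -> R) := exists N, forall n, (N <= n)%nat -> a (z n) = b (z n).

Lemma lemma_phi (b : Y) (Hb : Q b)
  (H : forall j, exists k : Y, Q k /\ exists m, (j <= m)%nat /\ ev (val k) (val b) /\ val k (z m) <> val b (z m)) :
  False.
Proof.
  assert (Hf : forall j, {p : Y * nat | Q (fst p) /\ (j <= snd p)%nat /\ ev (val (fst p)) (val b)
                 /\ val (fst p) (z (snd p)) <> val b (z (snd p))}).
  { intros j; apply constructive_indefinite_description. destruct (H j) as [k [Hk [m Hm]]].
    exists (k, m); simpl; tauto. }
  pose (K := fun j => fst (proj1_sig (Hf j))).
  pose (M := fun j => snd (proj1_sig (Hf j))).
  assert (HK : forall j, Q (K j) /\ (j <= M j)%nat /\ ev (val (K j)) (val b) /\ val (K j) (z (M j)) <> val b (z (M j))).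
  { intros j. exact (proj2_sig (Hf j)). }
  clearbody K M. clear Hf H.
  pose (c := fun j n => match Req_dec_T (val (K j) (z n)) (val b (z n)) with
                        | left _ => 0 | right _ => / Rabs (val (K j) (z n) - val b (z n)) end).
  assert (Hc0 : forall j n, 0 <= c j n).
  { intros j n. unfold c. destruct (Req_dec_T _ _) as [E|E]; [lra|].
    left. apply Rinv_0_lt_compat. apply Rabs_pos_lt. lra. }
  pose (w := fun n => INR n * sum_f_R0 (fun j => c j n) n).
  assert (Hw0 : forall n, 0 <= w n).
  { intros n. unfold w. apply Rmult_le_pos; [apply pos_INR| apply cond_pos_sum; auto]. }
  pose (psi := fun q : sub => supR (fun n => w n * Rabs (val (proj1_sig q) (z n) - val b (z n)))).
  destruct (Hpc psi) as [Mb HMb].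
  - apply box_cont. intros q e He. exists (fun n => (e / 2) / (w n + 1)). split.
    + intros n. apply Rdiv_lt_0_compat; [lra| pose proof (Hw0 n); lra].
    + intros q' Hq'. unfold psi.
      eapply Rle_lt_trans; [apply sup_close with (e := e / 2)|lra].
      intros n. apply wdiff; [auto| lra|].
      assert (E : forall a1 a2 a3 : R, a1 - a3 - (a2 - a3) = a1 - a2) by (intros; ring).
      rewrite E. apply Hq'.
  - destruct (arch Mb) as [j Hj].
    destruct (HK j) as [HQ [Hjm [[N HN] Hne]]].
    specialize (HMb (exist _ (K j) HQ)). unfold psi in HMb; simpl in HMb.
    set (u := fun n => w n * Rabs (val (K j) (z n) - val b (z n))) in HMb.
    assert (Hbu : bnd u).
    { apply (bnd_ev_zero u N). intros n Hn. unfold u. rewrite HN by auto.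
      rewrite Rminus_diag, Rabs_R0; ring. }
    pose proof (supR_ub u Hbu (M j)) as Hu.
    assert (Hbig : INR (M j) <= u (M j)).
    { unfold u, w. apply big_term. apply Rabs_pos_lt; lra.
      apply Rle_trans with (c j (M j)).
      - unfold c. destruct (Req_dec_T _ _) as [E|E]; [contradiction| lra].
      - apply (term_le_sum (fun j0 => c j0 (M j))); auto. }
    pose proof (le_INR _ _ Hjm). pose proof (Rle_abs (supR u)).
    lra.
Qed.


Lemma ev_sym a b : ev a b -> ev b a.
Proof. intros [N HN]; exists N; intros; symmetry; auto. Qed.

Lemma lemma_psi (b : nat -> Y) (Hb : forall t, Q (b t))
  (H : forall s t, s <> t -> ~ ev (val (b s)) (val (b t))) : False.
Proof.
  pose (c := fun s t n => match Req_dec_T (val (b s) (z n)) (val (b t) (z n)) with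
                        | left _ => 0 | right _ => / Rabs (val (b s) (z n) - val (b t) (z n)) end).
  assert (Hc0 : forall s t n, 0 <= c s t n).
  { intros s t n. unfold c. destruct (Req_dec_T _ _) as [E|E]; [lra|].
    left. apply Rinv_0_lt_compat. apply Rabs_pos_lt. lra. }
  pose (w := fun n => INR n * sum_f_R0 (fun t => sum_f_R0 (fun s => c s t n) n) n).
  assert (Hw0 : forall n, 0 <= w n).
  { intros n. unfold w. apply Rmult_le_pos; [apply pos_INR|].
    apply cond_pos_sum; intros; apply cond_pos_sum; auto. }
  pose (Rl := fun k k' : X -> R => exists M, forall n, w n * Rabs (k (z n) - k' (z n)) <= M).
  assert (Rsym : forall k k', Rl k k' -> Rl k' k).
  { intros k k' [M HM]. exists M. intros n. rewrite Rabs_minus_sym. auto. }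
  assert (Rtr : forall k1 k2 k3, Rl k1 k2 -> Rl k2 k3 -> Rl k1 k3).
  { intros k1 k2 k3 [M1 H1] [M2 H2]. exists (M1 + M2). intros n.
    specialize (H1 n); specialize (H2 n).
    pose proof (Rabs_triang (k1 (z n) - k2 (z n)) (k2 (z n) - k3 (z n))).
    replace (k1 (z n) - k2 (z n) + (k2 (z n) - k3 (z n))) with (k1 (z n) - k3 (z n)) in H0 by ring.
    pose proof (Rmult_le_compat_l _ _ _ (Hw0 n) H0). lra. }
  assert (Rne : forall s t, Rl (val (b s)) (val (b t)) -> s = t).
  { intros s t [M HM]. destruct (Nat.eq_dec s t) as [|Hst]; auto. exfalso.
    apply (H s t Hst).
    destruct (arch M) as [N0 HN0].
    apply NNPP. intros Hnev.
    assert (exists n, (N0 + s + t <= n)%nat /\ val (b s) (z n) <> val (b t) (z n)) as [n [Hn Hd]].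
    { apply NNPP; intros Hno. apply Hnev. exists (N0 + s + t)%nat. intros n Hn.
      apply NNPP; intros Hd. apply Hno. exists n; auto. }
    specialize (HM n).
    assert (INR n <= w n * Rabs (val (b s) (z n) - val (b t) (z n))).
    { unfold w. apply big_term. apply Rabs_pos_lt; lra.
      apply Rle_trans with (c s t n).
      - unfold c. destruct (Req_dec_T _ _) as [E|E]; [contradiction| lra].
      - apply Rle_trans with (sum_f_R0 (fun s0 => c s0 t n) n).
        + apply (term_le_sum (fun s0 => c s0 t n)); auto; lia.
        + apply (term_le_sum (fun t0 => sum_f_R0 (fun s0 => c s0 t0 n) n)).
          * intros; apply cond_pos_sum; auto.
          * lia. }
    assert (INR N0 <= INR n) by (apply le_INR; lia). lra. }
  pose (Lam := fun k : X -> R =>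
    match excluded_middle_informative (exists t, Rl k (val (b t))) with
    | left _ => INR (epsilon (inhabits 0%nat) (fun t => Rl k (val (b t))))
    | right _ => 0 end).
  assert (Lam_eq : forall k k', Rl k k' -> Lam k = Lam k').
  { intros k k' Hkk'. unfold Lam.
    destruct (excluded_middle_informative (exists t, Rl k (val (b t)))) as [E1|E1];
    destruct (excluded_middle_informative (exists t, Rl k' (val (b t)))) as [E2|E2].
    - pose proof (epsilon_spec (inhabits 0%nat) _ E1) as S1.
      pose proof (epsilon_spec (inhabits 0%nat) _ E2) as S2.
      f_equal. apply Rne. apply Rtr with k; [apply Rsym; auto|]. apply Rtr with k'; auto.
    - exfalso. apply E2. destruct E1 as [t Ht]. exists t. apply Rtr with k; auto.
    - exfalso. apply E1. destruct E2 as [t Ht]. exists t. apply Rtr with k'; auto.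
    - reflexivity. }
  assert (Lam_b : forall t, Lam (val (b t)) = INR t).
  { intros t. unfold Lam.
    destruct (excluded_middle_informative (exists t0, Rl (val (b t)) (val (b t0)))) as [E|E].
    - f_equal. symmetry. apply Rne. apply (epsilon_spec (inhabits 0%nat) _ E).
    - exfalso. apply E. exists t. exists 0. intros n. rewrite Rminus_diag, Rabs_R0. lra. }
  destruct (Hpc (fun q => Lam (val (proj1_sig q)))) as [Mb HMb].
  - apply box_cont. intros q e He. exists (fun n => / (w n + 1)). split.
    + intros n. apply Rinv_0_lt_compat. pose proof (Hw0 n); lra.
    + intros q' Hq'. cbv beta. match goal with |- Rabs (?A - ?B) < _ => replace A with B end.
      * rewrite Rminus_diag, Rabs_R0; auto.
      * apply Lam_eq. exists 1. intros n. specialize (Hq' n). rewrite Rabs_minus_sym in Hq'. cbv beta in Hq'. pose proof (Hw0 n).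
        apply Rle_trans with (w n * / (w n + 1)).
        -- apply Rmult_le_compat_l; auto. left; exact Hq'.
        -- replace (w n * / (w n + 1)) with (1 - / (w n + 1)) by (field; lra).
           assert (0 < / (w n + 1)) by (apply Rinv_0_lt_compat; lra). lra.
  - destruct (arch Mb) as [t Ht]. specialize (HMb (exist _ (b t) (Hb t))). simpl in HMb.
    rewrite Lam_b in HMb. pose proof (Rle_abs (INR t)). lra.
Qed.

End Core.

Lemma inv_bound e J j : e > 0 -> / e < INR J -> (J <= j)%nat -> / (INR j + 1) < e.
Proof.
  intros He HJ Hj. pose proof (le_INR _ _ Hj). pose proof (Rinv_0_lt_compat e He).
  rewrite <- (Rinv_inv e). apply Rinv_lt_contravar; [apply Rmult_lt_0_compat; lra| lra].
Qed.

Lemma local (Hpc : pseudocompact_in (graph_open openX) Q) (f : Y) (Hf : Q f)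
  G (HG : prod_open openX G) (Hgr : graph_in (val f) G) :
  exists d, d > 0 /\ forall g, Q g -> (forall x, Rabs (val g x - val f x) < d) -> graph_in (val g) G.
Proof.
  apply NNPP; intro Hn.
  assert (Hj : forall j : nat, exists p : Y * X, Q (fst p) /\
     (forall x, Rabs (val (fst p) x - val f x) < / (INR j + 1)) /\ ~ G (snd p, val (fst p) (snd p))).
  { intro j. apply NNPP; intro Hno. apply Hn. exists (/ (INR j + 1)). split.
    { apply Rinv_0_lt_compat; pose proof (pos_INR j); lra. }
    intros g Hg Hu x. apply NNPP; intro Hx. apply Hno. exists (g, x). simpl; auto. }
  pose (k := fun j => fst (proj1_sig (constructive_indefinite_description _ (Hj j)))).
  pose (z := fun j => snd (proj1_sig (constructive_indefinite_description _ (Hj j)))).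
  assert (Hkz : forall j, Q (k j) /\ (forall x, Rabs (val (k j) x - val f x) < / (INR j + 1))
                 /\ ~ G (z j, val (k j) (z j))).
  { intros j. exact (proj2_sig (constructive_indefinite_description _ (Hj j))). }
  clearbody k z. clear Hj Hn.
  assert (Hesc' : forall x, exists U, openX U /\ U x /\ exists J, forall j, (J <= j)%nat -> ~ U (z j)).
  { intro x. destruct (HG x (val f x) (Hgr x)) as [U0 [eps [HU0 [U0x [Heps HU0G]]]]].
    destruct (cont_at f x (eps / 2)) as [U1 [HU1 [U1x HU1c]]]; [lra|].
    exists (fun x' => U0 x' /\ U1 x'). split; [apply open_inter; auto|]. split; [auto|].
    destruct (arch (/ (eps / 2))) as [J HJ]. exists J. intros j Hjj [H0 H1].
    destruct (Hkz j) as [_ [Hu Hb]]. apply Hb. apply HU0G; auto.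
    pose proof (inv_bound (eps / 2) J j ltac:(lra) HJ Hjj).
    specialize (Hu (z j)). specialize (HU1c _ H1).
    pose proof (Rabs_triang (val (k j) (z j) - val f (z j)) (val f (z j) - val f x)).
    replace (val (k j) (z j) - val f (z j) + (val f (z j) - val f x)) with (val (k j) (z j) - val f x) in H2 by ring.
    lra. }
  assert (Hesc : forall x, exists J, forall j, (J <= j)%nat -> z j <> x).
  { intro x. destruct (Hesc' x) as [U [_ [Ux [J HJ]]]]. exists J. intros j Hjj E.
    apply (HJ j Hjj). rewrite E; auto. }
  assert (Hcd : forall x, exists U, openX U /\ U x /\ forall n, U (z n) -> z n = x).
  { intro x. destruct (Hesc' x) as [U [HU [Ux [J HJ]]]].
    assert (HV : forall J, exists V, openX V /\ V x /\ forall n, (n < J)%nat -> V (z n) -> z n = x).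
    { induction J0.
      - exists (fun _ => True). split; [apply open_full|]. split; auto. intros; lia.
      - destruct IHJ0 as [V [HV [Vx HVz]]].
        destruct (classic (z J0 = x)) as [E|E].
        + exists V. split; auto. split; auto. intros n Hn Vn.
          destruct (Nat.eq_dec n J0) as [->|]; auto. apply HVz; auto; lia.
        + destruct (HT1 x (z J0) (fun H => E (eq_sym H))) as [W [HW [Wx Wz]]].
          exists (fun y => V y /\ W y). split; [apply open_inter; auto|]. split; [auto|].
          intros n Hn [Vn Wn]. destruct (Nat.eq_dec n J0) as [->|].
          * contradiction. * apply HVz; auto; lia. }
    destruct (HV J) as [V [HV' [Vx HVz]]].
    exists (fun y => U y /\ V y). split; [apply open_inter; auto|]. split; [auto|].
    intros n [Un Vn]. destruct (Nat.lt_ge_cases n J) as [Hlt|Hge].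
    - apply HVz; auto. - exfalso; apply (HJ n); auto. }
  assert (Hconv : forall n e, e > 0 -> exists I, forall i, (I <= i)%nat ->
            Rabs (val (k i) (z n) - val f (z n)) < e).
  { intros n e He. destruct (arch (/ e)) as [I HI]. exists I. intros i Hi.
    destruct (Hkz i) as [_ [Hu _]]. specialize (Hu (z n)). pose proof (inv_bound e I i He HI Hi). lra. }
  assert (Hbad : forall i, val (k i) (z i) <> val f (z i)).
  { intros i E. destruct (Hkz i) as [_ [_ Hb]]. apply Hb. rewrite E. apply Hgr. }
  assert (HkQ : forall i, Q (k i)) by (intro i; apply (Hkz i)).
  destruct (classic (forall I, exists i, (I <= i)%nat /\ ev z (val (k i)) (val f))) as [HA|HA].
  { apply (lemma_phi z Hesc Hcd Hpc f Hf). intros j. destruct (HA j) as [i [Hi Hev]].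
    exists (k i). split; auto. exists i. auto. }
  assert (HI1 : exists I1, forall i, (I1 <= i)%nat -> ~ ev z (val (k i)) (val f)).
  { apply NNPP; intro H1. apply HA. intro I. apply NNPP; intro H2. apply H1. exists I.
    intros i Hi Hev. apply H2. exists i; auto. }
  destruct HI1 as [I1 HI1].
  destruct (classic (exists b : Y, Q b /\ ~ ev z (val b) (val f) /\
              forall I, exists i, (I <= i)%nat /\ ev z (val (k i)) (val b))) as [HB1|HB1].
  { destruct HB1 as [b [Hb [Hnev Hinf]]].
    apply (lemma_phi z Hesc Hcd Hpc b Hb). intros j.
    assert (exists m, (j <= m)%nat /\ val b (z m) <> val f (z m)) as [m [Hm Hd]].
    { apply NNPP; intro Hno. apply Hnev. exists j. intros n Hn. apply NNPP; intro Hd. apply Hno. exists n; auto. }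
    destruct (Hconv m (Rabs (val b (z m) - val f (z m)))) as [I HI].
    { apply Rabs_pos_lt; lra. }
    destruct (Hinf I) as [i [Hi Hev]]. exists (k i). split; auto. exists m. split; auto. split; auto.
    intros E. specialize (HI i Hi). rewrite E in HI. lra. }
  assert (HB2 : forall b : Y, Q b -> ~ ev z (val b) (val f) ->
                exists I, forall i, (I <= i)%nat -> ~ ev z (val (k i)) (val b)).
  { intros b Hb Hnev. apply NNPP; intro H1. apply HB1. exists b. split; auto. split; auto.
    intros I. apply NNPP; intro H2. apply H1. exists I. intros i Hi Hev. apply H2. exists i; auto. }
  assert (Claim : forall L, (forall s, In s L -> (I1 <= s)%nat) -> exists I, (I1 <= I)%nat /\
            forall i, (I <= i)%nat -> forall s, In s L -> ~ ev z (val (k i)) (val (k s))).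
  { induction L as [|s L IH]; intros HL.
    - exists I1. split; [lia|]. intros i _ s [].
    - destruct IH as [I' [HI'1 HI'2]]. { intros; apply HL; right; auto. }
      destruct (HB2 (k s) (HkQ s) (HI1 s (HL s (or_introl eq_refl)))) as [I'' HI''].
      exists (Nat.max I' I''). split; [lia|]. intros i Hi s' [<-|Hs'].
      + apply HI''; lia. + apply HI'2; auto; lia. }
  pose (nxt := fun L : list nat => epsilon (inhabits 0%nat)
     (fun I => (I1 <= I)%nat /\ forall i, (I <= i)%nat -> forall s, In s L -> ~ ev z (val (k i)) (val (k s)))).
  pose (hist := hist_gen nxt).
  assert (Inv : forall t s, In s (hist t) -> (I1 <= s)%nat).
  { induction t; intros s Hs; simpl in Hs. - destruct Hs.
    - destruct Hs as [<-|Hs]; auto.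
      exact (proj1 (epsilon_spec (inhabits 0%nat) _ (Claim _ IHt))). }
  assert (Prop_e : forall t, forall i, (nxt (hist t) <= i)%nat -> forall s, In s (hist t) ->
                     ~ ev z (val (k i)) (val (k s))).
  { intros t. exact (proj2 (epsilon_spec (inhabits 0%nat) _ (Claim _ (Inv t)))). }
  assert (Mem : forall t t', (t' < t)%nat -> In (nxt (hist t')) (hist t)).
  { induction t; intros t' Ht'. - lia.
    - change (hist (S t)) with (nxt (hist t) :: hist t).
      destruct (Nat.eq_dec t' t) as [->|]. left; auto. right; apply IHt; lia. }
  apply (lemma_psi z Hesc Hcd Hpc (fun t => k (nxt (hist t)))).
  - intros t; apply HkQ.
  - intros s t Hst Hev.
    destruct (Nat.lt_total s t) as [Hlt|[E|H]]; [| contradiction |].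
    + apply (Prop_e t (nxt (hist t)) (le_n _) (nxt (hist s)) (Mem t s Hlt)). apply ev_sym; auto.
    + apply (Prop_e s (nxt (hist s)) (le_n _) (nxt (hist t)) (Mem s t H)). auto.
Qed.

Definition dE (f g : X -> R) : R -> Prop := fun r => r = 0 \/ exists x, r = Rmin 1 (Rabs (f x - g x)).
Lemma dE_bound f g : bound (dE f g).
Proof. exists 1. intros r [->|[x ->]]; [lra| apply Rmin_l]. Qed.
Lemma dE_ex f g : exists r, dE f g r.
Proof. exists 0; left; auto. Qed.
Definition dist (f g : X -> R) : R := proj1_sig (completeness (dE f g) (dE_bound f g) (dE_ex f g)).

Lemma dist_ub f g x : Rmin 1 (Rabs (f x - g x)) <= dist f g.
Proof. unfold dist. pose proof (proj2_sig (completeness (dE f g) (dE_bound f g) (dE_ex f g))) as [H _].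
  apply H. right; exists x; auto. Qed.
Lemma dist_ge0 f g : 0 <= dist f g.
Proof. unfold dist. pose proof (proj2_sig (completeness (dE f g) (dE_bound f g) (dE_ex f g))) as [H _].
  apply H. left; auto. Qed.
Lemma dist_le f g s : 0 <= s -> (forall x, Rmin 1 (Rabs (f x - g x)) <= s) -> dist f g <= s.
Proof. intros Hs H. unfold dist. pose proof (proj2_sig (completeness (dE f g) (dE_bound f g) (dE_ex f g))) as [_ H2].
  apply H2. intros r [->|[x ->]]; auto. Qed.
Lemma dist_sym f g : dist f g = dist g f.
Proof.
  apply Rle_antisym; apply dist_le; try apply dist_ge0; intros x; rewrite Rabs_minus_sym; apply dist_ub.
Qed.
Lemma dist_tri f g h : dist f h <= dist f g + dist g h.
Proof.
  apply dist_le. pose proof (dist_ge0 f g); pose proof (dist_ge0 g h); lra.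
  intros x. pose proof (dist_ub f g x); pose proof (dist_ub g h x).
  pose proof (Rabs_triang (f x - g x) (g x - h x)).
  replace (f x - g x + (g x - h x)) with (f x - h x) in H1 by ring.
  pose proof (Rabs_pos (f x - g x)); pose proof (Rabs_pos (g x - h x)).
  revert H H0 H1. unfold Rmin. repeat destruct (Rle_dec _ _); lra.
Qed.
Lemma dist_self f : dist f f = 0.
Proof. apply Rle_antisym; [|apply dist_ge0]. apply dist_le; [lra|]. intros x.
  rewrite Rminus_diag, Rabs_R0. apply Rmin_r. Qed.
Lemma dist_unif f g t : dist f g < t -> t <= 1 -> forall x, Rabs (f x - g x) < t.
Proof. intros H Ht x. pose proof (dist_ub f g x). revert H0. unfold Rmin. destruct (Rle_dec _ _); lra. Qed.
Lemma dist_of_unif f g s : 0 <= s -> (forall x, Rabs (f x - g x) <= s) -> dist f g <= s.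
Proof. intros Hs H. apply dist_le; auto. intros x. eapply Rle_trans; [apply Rmin_r| auto]. Qed.

Lemma dcont_crit (psi : sub -> R) :
  (forall q e, e > 0 -> exists dl, dl > 0 /\ forall q',
     dist (val (proj1_sig q')) (val (proj1_sig q)) < dl -> Rabs (psi q' - psi q) < e) ->
  continuous (subspace_open (graph_open openX) Q) R_open psi.
Proof.
  intros H. apply cont_crit. intros q e He. destruct (H q e He) as [dl [Hdl Hq]].
  exists (FG (tube (proj1_sig q) (dl / 2))). split; [apply FG_open, tube_open|]. split.
  - apply tube_in; lra.
  - intros q' Hq'. apply Hq. eapply Rle_lt_trans; [apply dist_of_unif with (s := dl / 2)|lra]. lra.
    intros x. left. apply (tube_close _ _ _ Hq' x).
Qed.

Lemma local_d (Hpc : pseudocompact_in (graph_open openX) Q) f (Hf : Q f) U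
  (HU : graph_open openX U) (Uf : U f) :
  exists dl, dl > 0 /\ forall g, Q g -> dist (val g) (val f) < dl -> U g.
Proof.
  destruct (HU f Uf) as [G [HG [FGf HGs]]].
  destruct (local Hpc f Hf G HG FGf) as [dl [Hdl Hg]].
  exists (Rmin dl 1). split; [apply Rmin_pos; lra|]. intros g Hgq Hd. apply HGs.
  apply Hg; auto. intros x. eapply Rlt_le_trans; [apply (dist_unif _ _ (Rmin dl 1)); auto; apply Rmin_r| apply Rmin_l].
Qed.

Lemma Rmax0_lip a b : Rabs (Rmax 0 a - Rmax 0 b) <= Rabs (a - b).
Proof. unfold Rmax, Rabs; repeat (destruct (Rle_dec _ _)); repeat (destruct (Rcase_abs _)); lra. Qed.

Lemma totally_bounded (Hpc : pseudocompact_in (graph_open openX) Q) rho (Hrho : rho > 0) :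
  exists L : list Y, (forall p, In p L -> Q p) /\
    forall q, Q q -> exists p, In p L /\ dist (val q) (val p) < rho.
Proof.
  apply NNPP; intro Hno.
  assert (Hnext : forall L : list Y, (forall p, In p L -> Q p) ->
             exists q, Q q /\ forall p, In p L -> rho <= dist (val q) (val p)).
  { intros L HL. apply NNPP; intro H1. apply Hno. exists L. split; auto.
    intros q Hq. apply NNPP; intro H2. apply H1. exists q. split; auto.
    intros p Hp. apply Rnot_lt_le. intro H3. apply H2. exists p; auto. }
  destruct (Hnext nil) as [q0 _]. { intros p []. }
  pose (nxt := fun L : list Y => epsilon (inhabits q0)
                 (fun q => Q q /\ forall p, In p L -> rho <= dist (val q) (val p))).
  pose (hist := hist_gen nxt).
  assert (Inv : forall t p, In p (hist t) -> Q p).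
  { induction t; intros p Hp; simpl in Hp. - destruct Hp.
    - destruct Hp as [<-|Hp]; auto.
      exact (proj1 (epsilon_spec (inhabits q0) _ (Hnext _ IHt))). }
  pose (e := fun t => nxt (hist t)).
  assert (Pe : forall t, Q (e t) /\ forall p, In p (hist t) -> rho <= dist (val (e t)) (val p)).
  { intros t. exact (epsilon_spec (inhabits q0) _ (Hnext _ (Inv t))). }
  assert (Mem : forall t t', (t' < t)%nat -> In (e t') (hist t)).
  { induction t; intros t' Ht'. - lia.
    - change (hist (S t)) with (nxt (hist t) :: hist t).
      destruct (Nat.eq_dec t' t) as [->|]. left; auto. right; apply IHt; lia. }
  assert (Sep : forall s t, s <> t -> rho <= dist (val (e s)) (val (e t))).
  { intros s t Hst. destruct (Nat.lt_total s t) as [Hlt|[E|Hgt]]; [| contradiction |].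
    - rewrite dist_sym. apply (proj2 (Pe t)). apply Mem; auto.
    - apply (proj2 (Pe s)). apply Mem; auto. }
  assert (Uniq : forall (q : Y) n1 n2, dist (val q) (val (e n1)) < rho / 2 ->
            dist (val q) (val (e n2)) < rho / 2 -> n1 = n2).
  { intros q n1 n2 H1 H2. destruct (Nat.eq_dec n1 n2); auto. exfalso.
    pose proof (Sep n1 n2 n). pose proof (dist_tri (val (e n1)) (val q) (val (e n2))).
    rewrite dist_sym in H1. lra. }
  pose (u := fun (q : Y) n => INR n * Rmax 0 (1 - 4 * dist (val q) (val (e n)) / rho)).
  assert (Zero : forall q n, rho / 4 <= dist (val q) (val (e n)) -> u q n = 0).
  { intros q n H. unfold u. rewrite Rmax_left. ring.
    assert (4 * dist (val q) (val (e n)) / rho >= 1).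
    { apply Rle_ge. unfold Rdiv. rewrite Rmult_assoc, (Rmult_comm _ (/ rho)), <- Rmult_assoc.
      replace 1 with (4 * / rho * (rho / 4)) by (field; lra).
      apply Rmult_le_compat_l; auto. left; apply Rmult_lt_0_compat; [lra| apply Rinv_0_lt_compat; lra]. }
    lra. }
  assert (Upos : forall q n, 0 <= u q n).
  { intros q n. unfold u. apply Rmult_le_pos; [apply pos_INR| apply Rmax_l]. }
  assert (Ule : forall q n, u q n <= INR n).
  { intros q n. unfold u. pose proof (dist_ge0 (val q) (val (e n))).
    replace (INR n) with (INR n * 1) at 2 by ring. apply Rmult_le_compat_l; [apply pos_INR|].
    apply Rmax_lub; [lra|]. assert (0 <= 4 * dist (val q) (val (e n)) / rho).
    { unfold Rdiv. apply Rmult_le_pos; [lra| left; apply Rinv_0_lt_compat; lra]. } lra. }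
  assert (Bnd : forall q, bnd (u q)).
  { intros q. destruct (classic (exists n0, dist (val q) (val (e n0)) < rho / 2)) as [[n0 Hn0]|Hno0].
    - exists (INR n0). intros n. destruct (Nat.eq_dec n n0) as [->|Hne]; [apply Ule|].
      rewrite Zero. apply pos_INR. apply Rnot_lt_le. intro Hlt. apply Hne. apply (Uniq q); lra.
    - exists 0. intros n. rewrite Zero; [lra|]. apply Rnot_lt_le; intro Hlt. apply Hno0. exists n; lra. }
  destruct (Hpc (fun q => supR (u (proj1_sig q)))) as [Mb HMb].
  - apply dcont_crit. intros q eps Heps.
    destruct (classic (exists n0, dist (val (proj1_sig q)) (val (e n0)) < rho / 2)) as [[n0 Hn0]|Hno0].
    + set (dl := Rmin (rho / 4) (eps * rho / (4 * (INR n0 + 1)))).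
      assert (Hdl : dl > 0).
      { unfold dl. apply Rmin_pos; [lra|]. pose proof (pos_INR n0).
        unfold Rdiv. apply Rmult_lt_0_compat; [apply Rmult_lt_0_compat; lra| apply Rinv_0_lt_compat; lra]. }
      exists dl. split; auto. intros q' Hq'. cbv beta.
      assert (Hd1 : dl <= rho / 4) by apply Rmin_l.
      assert (Hd2 : dl <= eps * rho / (4 * (INR n0 + 1))) by apply Rmin_r.
      apply Rle_lt_trans with (INR n0 * (4 * dl / rho)).
      * apply sup_close. intros n. destruct (Nat.eq_dec n n0) as [->|Hne].
        -- unfold u. rewrite <- Rmult_minus_distr_l, Rabs_mult, Rabs_pos_eq by apply pos_INR.
           apply Rmult_le_compat_l; [apply pos_INR|].
           eapply Rle_trans; [apply Rmax0_lip|].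
           assert (E : forall a b, 1 - 4 * a / rho - (1 - 4 * b / rho) = (4 / rho) * (b - a)) by (intros; field; lra).
           rewrite E, Rabs_mult, Rabs_pos_eq.
           2: { unfold Rdiv; apply Rmult_le_pos; [lra| left; apply Rinv_0_lt_compat; lra]. }
           replace (4 * dl / rho) with (4 / rho * dl) by (field; lra).
           apply Rmult_le_compat_l; [unfold Rdiv; apply Rmult_le_pos; [lra| left; apply Rinv_0_lt_compat; lra]|].
           pose proof (dist_tri (val (proj1_sig q)) (val (proj1_sig q')) (val (e n0))).
           pose proof (dist_tri (val (proj1_sig q')) (val (proj1_sig q)) (val (e n0))).
           rewrite (dist_sym (val (proj1_sig q)) (val (proj1_sig q'))) in H.
           apply Rabs_le. unfold CX in *. lra.
        -- assert (Hfar : rho / 2 <= dist (val (proj1_sig q)) (val (e n))).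
           { apply Rnot_lt_le. intro Hlt. apply Hne. apply (Uniq (proj1_sig q)); lra. }
           pose proof (dist_tri (val (proj1_sig q)) (val (proj1_sig q')) (val (e n))).
           rewrite (dist_sym (val (proj1_sig q)) (val (proj1_sig q'))) in H.
           unfold CX in *. rewrite (Zero _ n), (Zero _ n) by lra.
           rewrite Rminus_diag, Rabs_R0. apply Rmult_le_pos; [apply pos_INR|].
           unfold Rdiv; apply Rmult_le_pos; [lra| left; apply Rinv_0_lt_compat; lra].
      * pose proof (pos_INR n0).
        apply Rle_lt_trans with (INR n0 * (4 / rho * (eps * rho / (4 * (INR n0 + 1))))).
        -- replace (4 * dl / rho) with (4 / rho * dl) by (field; lra).
           apply Rmult_le_compat_l; auto. apply Rmult_le_compat_l; auto.
           unfold Rdiv; apply Rmult_le_pos; [lra| left; apply Rinv_0_lt_compat; lra].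
        -- replace (INR n0 * (4 / rho * (eps * rho / (4 * (INR n0 + 1)))))
             with (eps - eps / (INR n0 + 1)) by (field; lra).
           assert (0 < eps / (INR n0 + 1)) by (apply Rdiv_lt_0_compat; lra). lra.
    + exists (rho / 4). split; [lra|]. intros q' Hq'. cbv beta.
      apply Rle_lt_trans with 0; [|lra].
      apply sup_close. intros n.
      assert (Hfar : rho / 2 <= dist (val (proj1_sig q)) (val (e n))).
      { apply Rnot_lt_le. intro Hlt. apply Hno0. exists n; auto. }
      pose proof (dist_tri (val (proj1_sig q)) (val (proj1_sig q')) (val (e n))).
      rewrite (dist_sym (val (proj1_sig q)) (val (proj1_sig q'))) in H.
      unfold CX in *. rewrite (Zero _ n), (Zero _ n) by lra.
      rewrite Rminus_diag, Rabs_R0. lra.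
  - destruct (arch Mb) as [t Ht]. destruct (Pe t) as [HQt _].
    specialize (HMb (exist _ (e t) HQt)). simpl in HMb.
    pose proof (supR_ub _ (Bnd (e t)) t).
    assert (u (e t) t = INR t).
    { unfold u. rewrite dist_self. rewrite Rmax_right. field. lra. lra. }
    pose proof (Rle_abs (supR (u (e t)))). lra.
Qed.

Lemma inv_close a a' dl eps : a > 0 -> eps > 0 -> Rabs (a' - a) < dl -> dl <= a / 2 ->
  dl <= eps * a * a / 2 -> Rabs (/ a' - / a) < eps.
Proof.
  intros Ha He H H1 H2.
  assert (Ha' : a' > a / 2) by (apply abs_lt_b in H; lra).
  replace (/ a' - / a) with ((a - a') * / (a * a')) by (field; lra).
  assert (Hp : 0 < a * a') by nra.
  rewrite Rabs_mult, (Rabs_pos_eq (/ (a * a'))) by (left; apply Rinv_0_lt_compat; lra).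
  apply (Rmult_lt_reg_r (a * a')); [lra|]. rewrite Rmult_assoc, Rinv_l, Rmult_1_r by lra.
  rewrite Rabs_minus_sym.
  assert (0 < eps * a) by nra.
  assert (eps * a * a / 2 < eps * (a * a')) by nra. lra.
Qed.

Lemma pc_compact (Hpc : pseudocompact_in (graph_open openX) Q) : compact_in (graph_open openX) Q.
Proof.
  intros C HC Hcov.
  pose (A := fun (q : Y) t => 0 < t /\ t <= 1 /\ exists U, C U /\
               forall g, Q g -> dist (val g) (val q) < t -> U g).
  assert (Ab : forall q, bound (A q)).
  { intros q. exists 1. intros t [_ [Ht _]]; auto. }
  assert (Ane : forall q, Q q -> exists t, A q t).
  { intros q Hq. destruct (Hcov q Hq) as [U [CU Uq]].
    destruct (local_d Hpc q Hq U (HC U CU) Uq) as [dl [Hdl Hdl2]].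
    exists (Rmin dl 1). split; [apply Rmin_pos; lra|]. split; [apply Rmin_r|].
    exists U. split; auto. intros g Hg Hd. apply Hdl2; auto. eapply Rlt_le_trans; [exact Hd|apply Rmin_l]. }
  pose (r := fun q : sub => proj1_sig (completeness (A (proj1_sig q)) (Ab _) (Ane _ (proj2_sig q)))).
  assert (Hr : forall q, is_lub (A (proj1_sig q)) (r q)).
  { intros q. exact (proj2_sig (completeness (A (proj1_sig q)) (Ab _) (Ane _ (proj2_sig q)))). }
  clearbody r.
  assert (rpos : forall q, 0 < r q).
  { intros q. destruct (Ane _ (proj2_sig q)) as [t Ht]. pose proof (proj1 (Hr q) t Ht).
    destruct Ht; lra. }
  assert (rlip : forall q q' : sub, r q <= r q' + dist (val (proj1_sig q)) (val (proj1_sig q'))).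
  { intros q q'. apply (proj2 (Hr q)). intros t [Ht0 [Ht1 [U [CU HU]]]].
    pose proof (dist_ge0 (val (proj1_sig q)) (val (proj1_sig q'))).
    destruct (Rle_dec t (dist (val (proj1_sig q)) (val (proj1_sig q')))).
    - pose proof (rpos q'); lra.
    - assert (HA : A (proj1_sig q') (t - dist (val (proj1_sig q)) (val (proj1_sig q')))).
      { split; [lra|]. split; [lra|]. exists U. split; auto. intros g Hg Hd. apply HU; auto.
        pose proof (dist_tri (val g) (val (proj1_sig q')) (val (proj1_sig q))).
        rewrite (dist_sym (val (proj1_sig q')) (val (proj1_sig q))) in H0. lra. }
      pose proof (proj1 (Hr q') _ HA). lra. }
  destruct (Hpc (fun q => / r q)) as [Mb HMb].
  { apply dcont_crit. intros q eps Heps.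
    exists (Rmin (r q / 2) (eps * r q * r q / 2)). split.
    { pose proof (rpos q). apply Rmin_pos; [lra|]. assert (0 < eps * r q) by nra. nra. }
    intros q' Hq'. apply (inv_close (r q) (r q') (Rmin (r q / 2) (eps * r q * r q / 2)) eps); auto.
    - apply rpos.
    - pose proof (rlip q q'). pose proof (rlip q' q).
      rewrite dist_sym in H. unfold CX in *. apply Rabs_def1; lra.
    - apply Rmin_l. - apply Rmin_r. }
  set (Mb' := Rmax Mb 1). assert (HMb' : 1 <= Mb') by apply Rmax_r.
  set (rho := / (2 * Mb')). assert (Hrho : rho > 0) by (apply Rinv_0_lt_compat; lra).
  assert (HL : forall q : Y, Q q -> exists U, C U /\ forall g, Q g -> dist (val g) (val q) < rho -> U g).
  { intros q Hq. set (qs := exist (fun t => Q t) q Hq).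
    assert (H1 : / r qs <= Mb') by (eapply Rle_trans; [apply Rle_abs| eapply Rle_trans; [apply HMb| apply Rmax_l]]).
    assert (H2 : / Mb' <= r qs).
    { rewrite <- (Rinv_inv (r qs)). apply Rinv_le_contravar; auto. apply Rinv_0_lt_compat, rpos. }
    assert (H3 : rho < / Mb').
    { unfold rho. rewrite Rinv_mult. assert (0 < / Mb') by (apply Rinv_0_lt_compat; lra).
      assert (/ 2 < 1) by lra. nra. }
    assert (exists t, A q t /\ rho < t) as [t [[_ [_ [U [CU HU]]]] Ht]].
    { apply NNPP; intro Hno. assert (r qs <= rho); [|lra].
      apply (proj2 (Hr qs)). intros t Ht. apply Rnot_lt_le. intro Hlt. apply Hno. exists t; auto. }
    exists U. split; auto. intros g Hg Hd. apply HU; auto; lra. }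
  destruct (totally_bounded Hpc rho Hrho) as [L [HLQ HLc]].
  assert (Hl : forall L' : list Y, (forall p, In p L' -> Q p) -> exists l : list (Y -> Prop),
      (forall U, In U l -> C U) /\ forall p, In p L' -> exists U, In U l /\
        forall g, Q g -> dist (val g) (val p) < rho -> U g).
  { induction L' as [|p L' IH]; intros HL'.
    - exists nil. split; [intros U []| intros p []].
    - destruct IH as [l [Hl1 Hl2]]. { intros; apply HL'; right; auto. }
      destruct (HL p (HL' p (or_introl eq_refl))) as [U [CU HU]].
      exists (U :: l). split.
      + intros U' [<-|HU']; auto.
      + intros p' [<-|Hp'].
        * exists U. split; [left; auto| auto].
        * destruct (Hl2 p' Hp') as [U' [HU'1 HU'2]]. exists U'. split; [right; auto| auto]. }
  destruct (Hl L HLQ) as [l [Hl1 Hl2]]. exists l. split; auto.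
  intros q Hq. destruct (HLc q Hq) as [p [Hp Hd]]. destruct (Hl2 p Hp) as [U [HU1 HU2]].
  exists U. split; auto.
Qed.

End Main.

Theorem proposition2p4 (X : Type) (openX : (X -> Prop) -> Prop)
  (Htop : is_topology openX) (HT1 : T1 openX) (Q : CX openX -> Prop) :
  (compact_in (graph_open openX) Q <-> countably_compact_in (graph_open openX) Q) /\
  (countably_compact_in (graph_open openX) Q <-> pseudocompact_in (graph_open openX) Q).
Proof.
  split; split.
  - apply compact_cc.
  - intros H. apply (pc_compact openX Htop HT1 Q). apply cc_pc; auto.
  - apply cc_pc.
  - intros H. apply compact_cc. apply (pc_compact openX Htop HT1 Q); auto.
Qed.
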